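(* In the Chung–Lu random graph model with expected degree sequence $(d_1,\dots,d_n)$, let $s\neq t$ be vertices and $r\ge 1$ an integer. Then $$E[SP_r(s,t)]\ \ge\ p_{st}\left(\frac{S_2}{S}\right)^{r-1}\left(1-\frac{r(r+1)\,p_{\max}}{2}\cdot\frac{S}{S_2}\right).$$
   Context: Chung–Lu model: given $d_1,\dots,d_n>0$ with $S=\sum_{i=1}^n d_i$ and $\max_i d_i^2\le S$, the random undirected graph on $\{1,\dots,n\}$ contains each edge $\{i,j\}$ (including loops $i=j$) independently with probability $p_{ij}=d_id_j/S$. Notation: $S_2=\sum_{i=1}^n d_i^2$, $d_{\max}=\max_i d_i$, $p_{\max}=d_{\max}^2/S$. $SP_r(s,t)$ is the number of simple paths of length $r$ from $s$ to $t$, i.e. sequences $(s=b_0,b_1,\dots,b_{r-1},b_r=t)$ of pairwise distinct vertices with each $\{b_i,b_{i+1}\}$ an edge of the graph. *)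

(* Defs.v *)
From HB Require Import structures.
From mathcomp Require Import all_boot all_order all_algebra.
Set Implicit Arguments. Unset Strict Implicit. Unset Printing Implicit Defensive.
Import Order.TTheory GRing.Theory Num.Theory.
Local Open Scope ring_scope.

Section ChungLu.
Variables (R : realFieldType) (n : nat) (d : 'I_n -> R).

Definition CL_S : R := \sum_(i < n) d i.
Definition CL_S2 : R := \sum_(i < n) d i ^+ 2.
(* d_max (the d_i are positive, so 0 is a harmless neutral element) *)
Definition CL_dmax : R := \big[Num.max/0]_(i < n) d i.
Definition CL_pmax : R := CL_dmax ^+ 2 / CL_S.
Definition CL_p (i j : 'I_n) : R := d i * d j / CL_S.

(* A graph on {0..n-1} (loops allowed) is encoded by its edge set: an
   unordered pair {i,j} is stored as the ordered pair (i,j) with i <= j. *)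
Definition graph_valid (A : {set 'I_n * 'I_n}) : bool :=
  A \subset [set ij : 'I_n * 'I_n | (ij.1 <= ij.2)%N].

Definition is_edge (A : {set 'I_n * 'I_n}) (i j : 'I_n) : bool :=
  (if (i <= j)%N then (i, j) else (j, i)) \in A.

Definition CL_weight (A : {set 'I_n * 'I_n}) : R :=
  \prod_(ij : 'I_n * 'I_n | (ij.1 <= ij.2)%N)
     (if ij \in A then CL_p ij.1 ij.2 else 1 - CL_p ij.1 ij.2).

Definition SP (A : {set 'I_n * 'I_n}) (r : nat) (s t : 'I_n) : nat :=
  #|[set b : {ffun 'I_r.+1 -> 'I_n} |
      [&& injectiveb b, b ord0 == s, b ord_max == t &
          [forall i : 'I_r, is_edge A (b (inord i)) (b (inord i.+1))]]]|.

Definition E_SP (r : nat) (s t : 'I_n) : R :=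
  \sum_(A : {set 'I_n * 'I_n} | graph_valid A) CL_weight A * (SP A r s t)%:R.

End ChungLu.

(* Main.v *)
Require Import Defs.
From HB Require Import structures.
From mathcomp Require Import all_boot all_order all_algebra zify ring lra.
Set Implicit Arguments. Unset Strict Implicit. Unset Printing Implicit Defensive.
Import Order.TTheory GRing.Theory Num.Theory.
Local Open Scope ring_scope.

Section S.
Variables (R : realFieldType) (n : nat) (d : 'I_n -> R).

Lemma edge_sum (Fs : {set 'I_n * 'I_n}) (HF : Fs \subset [set ij : 'I_n * 'I_n | (ij.1 <= ij.2)%N]) :
 \sum_(A | graph_valid A && (Fs \subset A)) CL_weight d A = \prod_(e in Fs) CL_p d e.1 e.2.
Proof.
pose F (e : 'I_n * 'I_n) := if (e.1 <= e.2)%N then CL_p d e.1 e.2 else 0.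
pose G (e : 'I_n * 'I_n) := if (e.1 <= e.2)%N then (if e \in Fs then 0 else 1 - CL_p d e.1 e.2) else 1.
have := @bigA_distr R 0 1 *%R +%R _ F G.
have -> : \prod_e (F e + G e) = \prod_(e in Fs) CL_p d e.1 e.2.
  rewrite [RHS]big_mkcond /=; apply: eq_bigr => e _; rewrite /F /G.
  case: ifP => [he|he]; first by case: ifP => _; rewrite ?addr0 ?subrKC.
  case: ifP => [heF|]; last by rewrite add0r.
  by move/subsetP: HF => /(_ e heF); rewrite inE he.
move=> ->; rewrite [RHS](bigID (fun A => graph_valid A && (Fs \subset A))) /=.
rewrite [X in _ = _ + X]big1 ?addr0; last first.
move=> A /nandP h.
have [e he0] : exists e, (if e \in A then F e else G e) = 0.
  case: h => [/subsetPn [e heA heV]|/subsetPn [e heF heA]].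
    by exists e; rewrite heA /F; move: heV; rewrite inE => /negbTE ->.
  exists e; rewrite (negbTE heA) /G heF.
  by move/subsetP: HF => /(_ e heF); rewrite inE => ->.
by rewrite (bigD1 e) //= he0 mul0r.
apply: eq_bigr => A /andP [hv hs].
  rewrite /CL_weight [LHS]big_mkcond /=.
  apply: eq_bigr => e _; rewrite /F /G; case: ifP => he.
    case: ifP => // heA; case: ifP => // heF.
    by move/subsetP: hs => /(_ e heF); rewrite heA.
  case: ifP => // heA; move/subsetP: hv => /(_ e heA); by rewrite inE he.
Qed.

Definition opair (i j : 'I_n) : 'I_n * 'I_n := if (i <= j)%N then (i, j) else (j, i).
Definition edges r (b : {ffun 'I_r.+1 -> 'I_n}) : {set 'I_n * 'I_n} :=
  [set opair (b (inord i)) (b (inord i.+1)) | i : 'I_r].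
Definition ispath r (s t : 'I_n) (b : {ffun 'I_r.+1 -> 'I_n}) :=
  [&& injectiveb b, b ord0 == s & b ord_max == t].

Lemma opair_eq x y x' y' : opair x y = opair x' y' -> (x = x' /\ y = y') \/ (x = y' /\ y = x').
Proof.
rewrite /opair; case: ifP => _; case: ifP => _ [-> ->]; by [left | right].
Qed.

Lemma CL_pC i j : CL_p d i j = CL_p d j i.
Proof. by rewrite /CL_p [d i * _]mulrC. Qed.

Lemma CL_p_opair i j : CL_p d (opair i j).1 (opair i j).2 = CL_p d i j.
Proof. by rewrite /opair; case: ifP => _ //=; rewrite CL_pC. Qed.

Lemma edges_valid r (b : {ffun 'I_r.+1 -> 'I_n}) : edges b \subset [set ij : 'I_n * 'I_n | (ij.1 <= ij.2)%N].
Proof.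
apply/subsetP => e /imsetP [i _ ->]; rewrite inE /opair.
by case: ifP => //= /negbT; rewrite -ltnNge => /ltnW.
Qed.

Lemma prod_edges r (b : {ffun 'I_r.+1 -> 'I_n}) : injective b ->
  \prod_(e in edges b) CL_p d e.1 e.2 = \prod_(i < r) CL_p d (b (inord i)) (b (inord i.+1)).
Proof.
move=> hb; rewrite big_imset /=; first by apply: eq_bigr => i _; rewrite CL_p_opair.
move=> i j _ _ /opair_eq [[/hb h1 _]|[/hb h1 /hb h2]].
  apply: val_inj; move: (congr1 (@nat_of_ord _) h1); rewrite !inordK //; by apply: leqW.
exfalso; move: (congr1 (@nat_of_ord _) h1) (congr1 (@nat_of_ord _) h2); rewrite !inordK ?ltnS ?(ltnW (ltn_ord _)) //; lia.
Qed.

Lemma E_SP_paths r s t : E_SP d r s t =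
  \sum_(b | @ispath r s t b) \prod_(i < r) CL_p d (b (inord i)) (b (inord i.+1)).
Proof.
rewrite /E_SP.
transitivity (\sum_(A | graph_valid A) \sum_(b | @ispath r s t b)
   (if edges b \subset A then CL_weight d A else 0)).
  apply: eq_bigr => A _; rewrite /SP -sumr_const -big_mkcondr mulr_sumr.
  apply: eq_big => [b|b _]; last by rewrite mulr1.
  rewrite inE /ispath -!andbA; congr [&& _, _, _ & _].
  apply/forallP/subsetP => [h e /imsetP [i _ ->]|h i]; first exact: h.
  by apply: h; apply/imsetP; exists i.
rewrite exchange_big /=; apply: eq_bigr => b /andP [/injectiveP hb _].
by rewrite -big_mkcondr edge_sum ?edges_valid // prod_edges.
Qed.

Section Mid.
Variables (k : nat) (s t : 'I_n).
Hypothesis hst : s != t.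

Definition ext (c : {ffun 'I_k -> 'I_n}) : {ffun 'I_k.+2 -> 'I_n} :=
  [ffun i : 'I_k.+2 => if (i : nat) == 0%N then s else if (i : nat) == k.+1 then t else if insub i.-1 is Some j then c j else s].
Definition mid (b : {ffun 'I_k.+2 -> 'I_n}) : {ffun 'I_k -> 'I_n} := [ffun i : 'I_k => b (inord i.+1)].

Definition avoid (X : {set 'I_n}) m (c : {ffun 'I_m -> 'I_n}) := [forall i, c i \notin X].

Lemma ext_mid c (i : 'I_k) : ext c (inord i.+1) = c i.
Proof.
have hi := ltn_ord i.
rewrite ffunE inordK; last by lia.
have -> : (i.+1 == k.+1) = false by apply/eqP; lia.
by rewrite /= valK.
Qed.

Lemma ext_ord0 c : ext c ord0 = s. Proof. by rewrite ffunE. Qed.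
Lemma ext_ordmax c : ext c ord_max = t. Proof. by rewrite ffunE /= eqxx. Qed.

Lemma mid_ext c : mid (ext c) = c.
Proof. by apply/ffunP => i; rewrite ffunE ext_mid. Qed.

Lemma ext_inj (c : {ffun 'I_k -> 'I_n}) : injective c -> avoid [set s; t] c -> injective (ext c).
Proof.
move=> hc /forallP ha.
have hav i : (c i != s) && (c i != t) by move: (ha i); rewrite !inE negb_or.
have hsym : t != s by rewrite eq_sym.
move=> x y; rewrite !ffunE.
have hx := ltn_ord x; have hy := ltn_ord y.
have [x0|xn0] := eqVneq (x : nat) 0%N; have [y0|yn0] := eqVneq (y : nat) 0%N.
- by move=> _; apply: val_inj; rewrite /= x0 y0.
- have [y1|yn1] := eqVneq (y : nat) k.+1.
    by move=> /eqP; rewrite (negbTE hst).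
  case: insubP => [j _ _|/negP hj]; last by exfalso; apply: hj; lia.
  by move=> h; move: (hav j); rewrite -h eqxx.
- have [x1|xn1] := eqVneq (x : nat) k.+1.
    by move=> /eqP; rewrite (negbTE hsym).
  case: insubP => [j _ _|/negP hj]; last by exfalso; apply: hj; lia.
  by move=> h; move: (hav j); rewrite h eqxx.
-   have [x1|xn1] := eqVneq (x : nat) k.+1; have [y1|yn1] := eqVneq (y : nat) k.+1.
  + by move=> _; apply: val_inj; rewrite /= x1 y1.
  +     case: insubP => [j _ _|/negP hj]; last by exfalso; apply: hj; lia.
    by move=> h; move: (hav j); rewrite -h eqxx andbF.
  +     case: insubP => [j _ _|/negP hj]; last by exfalso; apply: hj; lia.
    by move=> h; move: (hav j); rewrite h eqxx andbF.
  +     case: insubP => [j _ hj|/negP hj]; last by exfalso; apply: hj; lia.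
    case: insubP => [j' _ hj'|/negP hj']; last by exfalso; apply: hj'; lia.
    move/hc => hjj; apply: val_inj => /=; move: hj hj'; rewrite hjj => -> h. lia.
Qed.

Lemma ispath_ext (c : {ffun 'I_k -> 'I_n}) : @ispath k.+1 s t (ext c) = injectiveb c && avoid [set s; t] c.
Proof.
rewrite /ispath ext_ord0 ext_ordmax !eqxx !andbT.
apply/injectiveP/andP => [hi|[/injectiveP hc ha]]; last exact: ext_inj.
split.
  apply/injectiveP => i j h; have := congr1 (ext c) (erefl (inord i.+1 : 'I_k.+2)).
  rewrite {2}ext_mid h -ext_mid => /hi /(congr1 (@nat_of_ord _)); rewrite !inordK ?ltnS ?(ltnW (ltn_ord _)) //.
  by move=> [] /val_inj.
rewrite /avoid; apply/forallP => i; rewrite !inE negb_or; apply/andP; split; apply/eqP => h.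
  have hi' := ltn_ord i.
  have := ext_mid c i; rewrite h -(ext_ord0 c) => /hi h0.
  by move: (congr1 (@nat_of_ord _) h0); rewrite inordK /=; lia.
have hi' := ltn_ord i.
have := ext_mid c i; rewrite h -(ext_ordmax c) => /hi h0.
by move: (congr1 (@nat_of_ord _) h0); rewrite inordK /=; lia.
Qed.

Lemma sum_mid (F : {ffun 'I_k -> 'I_n} -> R) :
  \sum_(b | @ispath k.+1 s t b) F (mid b) = \sum_(c : {ffun 'I_k -> 'I_n} | injectiveb c && avoid [set s; t] c) F c.
Proof.
rewrite (reindex_onto ext mid); last first.
  move=> b /andP [_ /andP [/eqP h0 /eqP hm]]; apply/ffunP => i; rewrite ffunE.
  have hi := ltn_ord i.
  have [i0|in0] := eqVneq (i : nat) 0%N; first by rewrite -h0; congr (b _); apply: val_inj.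
  have [i1|in1] := eqVneq (i : nat) k.+1; first by rewrite -hm; congr (b _); apply: val_inj.
  case: insubP => [j _ hj|/negP hj]; last by exfalso; apply: hj; lia.
  rewrite ffunE; congr (b _); apply: val_inj; rewrite /= inordK hj; lia.
apply: eq_big => [c|c _]; last by rewrite mid_ext.
by rewrite ispath_ext mid_ext eqxx andbT.
Qed.
End Mid.

Definition fcons m (v : 'I_n) (g : {ffun 'I_m -> 'I_n}) : {ffun 'I_m.+1 -> 'I_n} :=
  [ffun i => if unlift ord0 i is Some j then g j else v].
Definition ftail m (c : {ffun 'I_m.+1 -> 'I_n}) : {ffun 'I_m -> 'I_n} :=
  [ffun j => c (lift ord0 j)].

Lemma fcons0 m v (g : {ffun 'I_m -> 'I_n}) : fcons v g ord0 = v.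
Proof. by rewrite ffunE unlift_none. Qed.
Lemma fconsS m v (g : {ffun 'I_m -> 'I_n}) j : fcons v g (lift ord0 j) = g j.
Proof. by rewrite ffunE liftK. Qed.

Lemma fcons_bij m : bijective (fun p : 'I_n * {ffun 'I_m -> 'I_n} => fcons p.1 p.2).
Proof.
exists (fun c : {ffun 'I_m.+1 -> 'I_n} => (c ord0, ftail c)).
  by move=> [v g] /=; rewrite fcons0; congr (_, _); apply/ffunP => j; rewrite ffunE fconsS.
move=> c /=; apply/ffunP => i; case: (unliftP ord0 i) => [j ->|->].
  by rewrite fconsS ffunE.
by rewrite fcons0.
Qed.

Lemma fcons_cond m X v (g : {ffun 'I_m -> 'I_n}) :
  injectiveb (fcons v g) && avoid X (fcons v g) =
  (v \notin X) && (injectiveb g && avoid (v |: X) g).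
Proof.
apply/andP/andP => [[/injectiveP hi /forallP ha]|[hv /andP [/injectiveP hi /forallP ha]]].
  split; first by have := ha ord0; rewrite fcons0.
  apply/andP; split.
    apply/injectiveP => i j h; apply: (@lift_inj _ ord0); apply: hi.
    by rewrite !fconsS.
  apply/forallP => j; rewrite !inE negb_or; apply/andP; split.
    apply/eqP => h; have : fcons v g (lift ord0 j) = fcons v g ord0 by rewrite fconsS fcons0.
    by move/hi => h0; move: (neq_lift ord0 j); rewrite h0 eqxx.
  by have := ha (lift ord0 j); rewrite fconsS.
split.
  apply/injectiveP => i i'.
  case: (unliftP ord0 i) => [j ->|->]; case: (unliftP ord0 i') => [j' ->|->];
    rewrite ?fconsS ?fcons0 //.
  - by move/hi ->.
  - by move=> h; have := ha j; rewrite h !inE eqxx.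
  - by move=> h; have := ha j'; rewrite -h !inE eqxx.
apply/forallP => i; case: (unliftP ord0 i) => [j ->|->]; rewrite ?fconsS ?fcons0 //.
by have := ha j; rewrite !inE negb_or => /andP [].
Qed.

Definition Fsum m (X : {set 'I_n}) : R :=
  \sum_(c : {ffun 'I_m -> 'I_n} | injectiveb c && avoid X c) \prod_(i < m) d (c i) ^+ 2.

Lemma Fsum_rec m X : Fsum m.+1 X = \sum_(v | v \notin X) d v ^+ 2 * Fsum m (v |: X).
Proof.
rewrite /Fsum big_mkcond (reindex _ (onW_bij _ (@fcons_bij m))) /=.
rewrite -(pair_bigA _ (fun v g => if injectiveb (fcons v g) && avoid X (fcons v g)
   then \prod_(i < m.+1) d (fcons v g i) ^+ 2 else 0)) /=.
rewrite [RHS]big_mkcond /=; apply: eq_bigr => v _.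
case: (boolP (v \in X)) => hv /=.
  by apply: big1 => g _; rewrite fcons_cond hv.
rewrite mulr_sumr [RHS]big_mkcond /=; apply: eq_bigr => g _.
rewrite fcons_cond hv /=; case: ifP => // _.
by rewrite big_ord_recl fcons0; congr (_ * _); apply: eq_bigr => i _; rewrite fconsS.
Qed.

Section Bound.
Hypothesis hpos : forall i, 0 < d i.
Local Notation S2 := (CL_S2 d).
Local Notation D := (CL_dmax d ^+ 2).

Lemma d_le_max i : d i <= CL_dmax d.
Proof. by rewrite /CL_dmax (bigD1 i) //= le_max lexx. Qed.

Lemma dsq_le i : d i ^+ 2 <= D.
Proof. have := d_le_max i; have := hpos i; rewrite !expr2; nra. Qed.

Lemma D_ge0 : 0 <= D.
Proof. exact: sqr_ge0. Qed.

Lemma Fsum_ge0 m X : 0 <= Fsum m X.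
Proof. by apply: sumr_ge0 => c _; apply: prodr_ge0 => i _; apply: sqr_ge0. Qed.

Lemma S2_ge0 : 0 <= S2.
Proof. by apply: sumr_ge0 => i _; apply: sqr_ge0. Qed.

Lemma sum_notin (X : {set 'I_n}) : S2 - (#|X|)%:R * D <= \sum_(v | v \notin X) d v ^+ 2.
Proof.
rewrite /CL_S2 (bigID (fun i => i \in X)) /=.
have : \sum_(i < n | i \in X) d i ^+ 2 <= #|X|%:R * D.
  rewrite -[Z in _ <= Z * _](@sumr_const R _ (mem X) 1) mulr_suml.
  by apply: ler_sum => i _; rewrite mul1r dsq_le.
lra.
Qed.

Lemma Fsum0 X : Fsum 0 X = 1.
Proof.
rewrite /Fsum (eq_bigl xpredT); last first.
  by move=> c; apply/andP; split; [apply/injectiveP => -[] | apply/forallP => -[]].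
under eq_bigr do rewrite big_ord0.
by rewrite sumr_const card_ffun !card_ord expn0.
Qed.

Definition cf (m x : nat) : R := x%:R * m%:R + (m%:R * m%:R - m%:R) / 2.

Lemma cf_ge0 m x : 0 <= cf m x.
Proof.
rewrite /cf; have h : m%:R <= m%:R * m%:R :> R.
  by rewrite -natrM ler_nat; case: (m) => // m0; rewrite leq_pmulr.
have : 0 <= x%:R * m%:R :> R by rewrite -natrM ler0n.
lra.
Qed.

Lemma cfS m x : cf m.+1 x = cf m x.+1 + x%:R.
Proof. by rewrite /cf !mulrS; field. Qed.

Lemma Fsum_bound m : forall X : {set 'I_n}, S2 ^+ m.+1 - cf m #|X| * D * S2 ^+ m <= S2 * Fsum m X.
Proof.
elim: m => [|m IH] X.
  by rewrite Fsum0 /cf !mulr0 ?mul0r ?subr0 ?expr0 ?mulr1 ?mul0r ?subr0 ?expr1 ?mulr1 addr0 mul0r subr0.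
rewrite Fsum_rec mulr_sumr.
set Y := S2 ^+ m.
set L := S2 ^+ m.+1 - cf m #|X|.+1 * D * Y.
have hY : 0 <= Y by rewrite exprn_ge0 // S2_ge0.
have hc := cf_ge0 m #|X|.+1.
have hD := D_ge0.
have hS := S2_ge0.
have hx : 0 <= #|X|%:R :> R by rewrite ler0n.
have eL : S2 ^+ m.+1 = S2 * Y by rewrite exprS.
have eT : S2 ^+ m.+2 - cf m.+1 #|X| * D * S2 ^+ m.+1 = S2 * L - #|X|%:R * D * (S2 * Y).
  by rewrite /L cfS !exprS -/Y; ring.
rewrite eT.
case: (lerP 0 L) => hL.
  have hle : \sum_(v | v \notin X) d v ^+ 2 * L <= \sum_(v | v \notin X) S2 * (d v ^+ 2 * Fsum m (v |: X)).
    apply: ler_sum => v hv; rewrite mulrCA; apply: ler_wpM2l; first exact: sqr_ge0.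
    by have := IH (v |: X); rewrite cardsU1 hv.
  apply: le_trans hle; rewrite -mulr_suml.
  have hA := sum_notin X.
  have h1 : (S2 - #|X|%:R * D) * L <= (\sum_(v | v \notin X) d v ^+ 2) * L by apply: ler_wpM2r.
  have h2 : L <= S2 * Y by rewrite /L eL; have := mulr_ge0 (mulr_ge0 hc hD) hY; lra.
  have h3 : #|X|%:R * D * L <= #|X|%:R * D * (S2 * Y) by apply: ler_wpM2l => //; apply: mulr_ge0.
  lra.
apply: le_trans (_ : 0 <= _).
  have : 0 <= #|X|%:R * D * (S2 * Y) by apply: mulr_ge0; apply: mulr_ge0.
  have : S2 * L <= 0 by apply: mulr_ge0_le0 => //; apply: ltW.
  lra.
apply: sumr_ge0 => v _; apply: mulr_ge0 => //; apply: mulr_ge0; [exact: sqr_ge0 | exact: Fsum_ge0].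
Qed.
End Bound.

Lemma prod_path k s t (b : {ffun 'I_k.+2 -> 'I_n}) : b ord0 = s -> b ord_max = t ->
  \prod_(i < k.+1) CL_p d (b (inord i)) (b (inord i.+1)) =
  CL_p d s t / CL_S d ^+ k * \prod_(i < k) d (mid b i) ^+ 2.
Proof.
move=> h0 hm.
have e1 : \prod_(i < k.+1) d (b (inord i)) = d s * \prod_(i < k) d (mid b i).
  rewrite big_ord_recl; congr (_ * _).
    by rewrite -h0; congr (d (b _)); apply: val_inj; rewrite /= inordK.
  by apply: eq_bigr => i _; rewrite ffunE.
have e2 : \prod_(i < k.+1) d (b (inord i.+1)) = \prod_(i < k) d (mid b i) * d t.
  rewrite big_ord_recr; congr (_ * _).
    by apply: eq_bigr => i _; rewrite ffunE.
  by rewrite -hm; congr (d (b _)); apply: val_inj; rewrite /= inordK.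
rewrite /CL_p.
rewrite (eq_bigr (fun i : 'I_k.+1 => d (b (inord i)) * d (b (inord i.+1)) * (CL_S d)^-1)) //.
rewrite !big_split /= e1 e2 prodr_const card_ord -exprVn.
move: (CL_S d)^-1 => Si; rewrite exprS; ring.
Qed.
End S.

Unset Implicit Arguments.
Set Strict Implicit.

Theorem lemma2 (R : realFieldType) (n : nat) (d : 'I_n -> R)
  (hpos : forall i, 0 < d i)
  (hmax : forall i, d i ^+ 2 <= CL_S d)
  (s t : 'I_n) (hst : s != t) (r : nat) (hr : (1 <= r)%N) :
  CL_p d s t * (CL_S2 d / CL_S d) ^+ (r - 1)
    * (1 - (r * (r + 1))%:R * CL_pmax d / 2 * (CL_S d / CL_S2 d))
  <= E_SP d r s t.
Proof.
case: r hr => // k _.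
rewrite subn1 /= E_SP_paths.
have hS : 0 < CL_S d.
  rewrite /CL_S (bigD1 s) //=; apply: ltr_pwDl; first exact: hpos.
  by apply: sumr_ge0 => i _; apply: ltW.
have hS2 : 0 < CL_S2 d.
  rewrite /CL_S2 (bigD1 s) //=; apply: ltr_pwDl; first by apply: exprn_gt0.
  by apply: sumr_ge0 => i _; apply: sqr_ge0.
rewrite (eq_bigr (fun b => CL_p d s t / CL_S d ^+ k * \prod_(i < k) d (mid b i) ^+ 2)); last first.
  by move=> b /and3P [_ /eqP h0 /eqP hm]; apply: prod_path.
rewrite -mulr_sumr (sum_mid hst (fun c => \prod_(i < k) d (c i) ^+ 2)) -/(Fsum d k [set s; t]).
have hb := Fsum_bound hpos k [set s; t]; rewrite cards2 hst in hb.
set F := Fsum d k [set s; t] in hb *.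
set S := CL_S d in hS *; set S2 := CL_S2 d in hS2 hb *.
set D := CL_dmax d ^+ 2 in hb.
have hD : 0 <= D by apply: sqr_ge0.
have hp : 0 < CL_p d s t by rewrite /CL_p; apply: divr_gt0 => //; apply: mulr_gt0.
have hY : 0 <= S2 ^+ k by apply: exprn_ge0; apply: ltW.
set c := (k.+1 * (k.+1 + 1))%:R : R.
have hc : cf R k 2 <= c / 2.
  have -> : c / 2 = cf R k 2 + 1 by rewrite /c /cf natrM; field.
  lra.
have key : S2 ^+ k * (1 - c * (D / S) / 2 * (S / S2)) <= F.
  rewrite -(ler_pM2l hS2).
  have -> : S2 * (S2 ^+ k * (1 - c * (D / S) / 2 * (S / S2))) = S2 ^+ k.+1 - c / 2 * D * S2 ^+ k.
    rewrite exprS; field; apply/andP; split; apply: lt0r_neq0 => //.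
  apply: le_trans hb; rewrite lerD2l lerN2; apply: ler_wpM2r => //; apply: ler_wpM2r => //.
have e4 : forall a b x yi : R, a * (x * yi) * b = a * yi * (x * b) by move=> *; ring.
rewrite /CL_pmax -/S expr_div_n (e4 (CL_p d s t)).
apply: ler_wpM2l => //; apply: divr_ge0; [exact: ltW | apply: exprn_ge0; exact: ltW].
Qed.
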